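(* Let $U$ be a unicyclic graph with an edge $\ell u\in E(U)$ such that $\deg(\ell)=1$ and $u\notin V(\operatorname{Cycles}(U))$. (i) If $v\in V(\operatorname{Cycles}(U))$, then there exists a u-switch $\tau$ over $U$ such that $\ell v\in E(\tau(U))$. (ii) If $v\notin V(\operatorname{Cycles}(U))$, $v\neq u$ and $\deg(v)\ge2$, then there exists a u-switch $\tau$ over $U$ such that $\ell v\in E(\tau(U))$.
   Context: Graphs are finite, simple, undirected, labeled. A unicyclic graph is a connected graph with exactly one cycle. For vertices $a,b,c,d$, $A=\binom{a\ b}{c\ d}$ is interchangeable in $G$ if $ab,cd\in E(G)$, $\{a,b\}\cap\{c,d\}=\varnothing$, $ac,bd\notin E(G)$; the 2-switch $\tau_A$ sends $G$ to $G-ab-cd+ac+bd$ if $A$ is interchangeable and to $G$ otherwise (trivial). A nontrivial 2-switch $\tau$ over a unicyclic $U$ is a u-switch if $\tau(U)$ is unicyclic. $\operatorname{Cycles}(G)$ is the subgraph induced by vertices lying on some cycle of $G$. *)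

(* Defs.v *)
From mathcomp Require Import all_boot.
Set Implicit Arguments. Unset Strict Implicit. Unset Printing Implicit Defensive.

Section Graphs.
Variable T : finType.

Definition simple_graph (e : rel T) := symmetric e /\ irreflexive e.

Definition deg (e : rel T) (x : T) : nat := #|[set y | e x y]|.

Definition connected_graph (e : rel T) := forall x y : T, connect e x y.

Definition is_cycle (e : rel T) (c : seq T) :=
  [&& uniq c, 3 <= size c & cycle e c].

Definition cycle_edges (c : seq T) : {set {set T}} :=
  [set [set x; next c x] | x in c].

(* exactly one cycle (cycles as subgraphs, i.e. determined by their edges) *)
Definition unicyclic (e : rel T) :=
  [/\ connected_graph e,
      exists c, is_cycle e c &
      forall c1 c2, is_cycle e c1 -> is_cycle e c2 ->
        cycle_edges c1 = cycle_edges c2].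

(* vertices of Cycles(G): vertices lying on some cycle *)
Definition on_cycle (e : rel T) (x : T) := exists c, is_cycle e c /\ x \in c.

Definition edge_is (x y a b : T) : bool :=
  ((x == a) && (y == b)) || ((x == b) && (y == a)).

Definition interchangeable (e : rel T) (a b c d : T) : bool :=
  [&& e a b, e c d, a != c, a != d, b != c, b != d, ~~ e a c & ~~ e b d].

Definition two_switch (e : rel T) (a b c d : T) : rel T :=
  if interchangeable e a b c d then
    fun x y => (e x y && ~~ edge_is x y a b && ~~ edge_is x y c d)
               || edge_is x y a c || edge_is x y b d
  else e.

Definition u_switch (e : rel T) (a b c d : T) :=
  interchangeable e a b c d /\ unicyclic (two_switch e a b c d).

End Graphs.

(* Main.v *)
Require Import Defs.
From mathcomp Require Import all_boot.
Set Implicit Arguments. Unset Strict Implicit. Unset Printing Implicit Defensive.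


Section Gen.
Variable T : finType.
Implicit Types (r : rel T) (c : seq T).

Lemma conn_inv r (P : pred T) : (forall a b, r a b -> P a -> P b) ->
  forall x y, connect r x y -> P x -> P y.
Proof.
move=> H x y /connectP[p pp ->]; elim: p x pp => //= z p IH x /andP[rz pz] Px.
exact: IH pz (H _ _ rz Px).
Qed.

Lemma crossing r (P : pred T) x y : connect r x y -> P x -> ~~ P y ->
  exists a b, [/\ r a b, P a & ~~ P b].
Proof.
move=> /connectP[p pp ->]; elim: p x pp => [|z p IH] x /=; first by move=> _ ->.
move=> /andP[rz pz] Px Py; case Pz: (P z); first exact: IH pz Pz Py.
by exists x, z; rewrite Pz.
Qed.

Lemma set2_inv (a b x y : T) : [set a; b] = [set x; y] ->
  (a = x /\ b = y) \/ (a = y /\ b = x).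
Proof.
move=> E.
have ha : a \in [set x; y] by rewrite -E set21.
have hb : b \in [set x; y] by rewrite -E set22.
have hx : x \in [set a; b] by rewrite E set21.
have hy : y \in [set a; b] by rewrite E set22.
case/set2P: ha => Ea; case/set2P: hb => Eb; subst a b; auto.
  by case/set2P: hy => ->; auto.
by case/set2P: hx => ->; auto.
Qed.

Lemma edge_isE (a b x y : T) : edge_is a b x y = ([set a; b] == [set x; y]).
Proof.
rewrite /edge_is; apply/idP/eqP.
  by case/orP=> /andP[/eqP-> /eqP->] //; rewrite setUC.
by case/set2_inv=> [[-> ->]|[-> ->]]; rewrite !eqxx ?orbT.
Qed.

Lemma edge_is_sym (a b x y : T) : edge_is a b x y = edge_is b a x y.
Proof. by rewrite !edge_isE setUC. Qed.

Lemma edge_is_sym2 (a b x y : T) : edge_is a b x y = edge_is a b y x.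
Proof. by rewrite !edge_isE [[set y; x]]setUC. Qed.

Lemma next_cons2 (x y : T) s : next (x :: y :: s) x = y.
Proof. by rewrite /next /= eqxx. Qed.

Lemma next_cons3 (x y z : T) s : x != y -> next (x :: y :: z :: s) y = z.
Proof. by move=> xy; rewrite /next /= eq_sym (negbTE xy) eqxx. Qed.

Lemma NN c z : uniq c -> 2 < size c -> z \in c -> next c (next c z) != z.
Proof.
move=> Hu Hs Hz; case: (rot_to Hz) => i s Hrot.
rewrite -!(next_rot i Hu) Hrot.
have : uniq (z :: s) by rewrite -Hrot rot_uniq.
have : 2 < size (z :: s) by rewrite -Hrot size_rot.
case: s {Hrot} => [|a [|b s]] //= _.
rewrite !inE !negb_or => /andP[/and3P[za zb _] /andP[/andP[ab _] _]].
by rewrite eqxx (eq_sym a z) (negbTE za) eqxx eq_sym.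
Qed.

Definition L1rel c x := fun a b =>
  [&& a \in c, b == next c a & ~~ edge_is a b x (next c x)].

Lemma L1_cons x s : uniq (x :: s) -> 2 < size (x :: s) ->
  connect (L1rel (x :: s) x) (next (x :: s) x) x.
Proof.
case: s => [|y [|z q]] Hu Hs //.
have Hcyc : path (frel (next [:: x, y, z & q])) y (rcons (z :: q) x).
  by case/andP: (cycle_next Hu).
move: Hcyc; rewrite rcons_path => /andP[Hp Hl].
rewrite next_cons2; apply/connectP; exists (rcons (z :: q) x); last by rewrite last_rcons.
have Hu' := Hu.
move: Hu'; rewrite [uniq _]/= !inE !negb_or => /andP[/and3P[xy xz xq] /andP[/andP[yz yq] /andP[zq _]]].
have nx : forall a, a \in y :: z :: q -> a != x.
  move=> a; rewrite !inE => /or3P[/eqP->|/eqP->|aq]; rewrite 1?eq_sym //.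
  by apply/eqP => ax; move: xq; rewrite ax aq.
rewrite rcons_path; apply/andP; split.
  apply: (sub_in_path (P := [in y :: z :: q])) Hp; last exact: allss.
  move=> a b Ha Hb /eqP Hab; rewrite /L1rel next_cons2 -Hab eqxx andTb.
  rewrite edge_isE; apply/andP; split; first by rewrite inE Ha orbT.
  apply/negP => /eqP /set2_inv [[ax _]|[_ bx]]; first by move: (nx a Ha); rewrite ax eqxx.
  by move: (nx b Hb); rewrite -Hab bx eqxx.
rewrite /L1rel next_cons2; apply/and3P; split.
- by rewrite inE mem_last orbT.
- by rewrite eq_sym.
rewrite edge_isE; apply/negP => /eqP /set2_inv [[lx _]|[ly _]].
  by move: (nx _ (mem_last y (z :: q))); rewrite lx eqxx.
move: ly; rewrite [last _ _]/= => ly; have := mem_last z q; rewrite ly => yin.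
rewrite inE in yin; case/orP: yin => [/eqP yz'|yq'].
  by rewrite yz' eqxx in yz.
by rewrite yq' in yq.
Qed.

Lemma L1 c x : uniq c -> 2 < size c -> x \in c ->
  connect (L1rel c x) (next c x) x.
Proof.
move=> Hu Hs Hx; case: (rot_to Hx) => i s Hrot.
have Hu' : uniq (x :: s) by rewrite -Hrot rot_uniq.
have Hs' : 2 < size (x :: s) by rewrite -Hrot size_rot.
have := L1_cons Hu' Hs'; rewrite -Hrot.
have E : L1rel (rot i c) x =2 L1rel c x.
  by move=> a b; rewrite /L1rel mem_rot !(next_rot i Hu).
by rewrite (eq_connect E) (next_rot i Hu).
Qed.

Lemma L2 r x y : symmetric r -> r x y -> x != y ->
  connect (fun a b => r a b && ~~ edge_is a b x y) x y ->
  exists c, is_cycle r c /\ [set x; y] \in cycle_edges c.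
Proof.
move=> sr rxy nxy /connectP[p pp ly].
move: ly; case: (shortenP pp) => p' pp' up' _ ly.
have Hs : 1 < size p'.
  case: p' pp' up' ly => [|z [|z2 p'']] //=; first by move=> _ _ yx; rewrite yx eqxx in nxy.
  by move=> /andP[/andP[_ +] _] _ yz; rewrite yz /edge_is !eqxx.
subst y.
exists (x :: p'); split.
  apply/and3P; split => //.
  have -> : cycle r (x :: p') = path r x (rcons p' x) by [].
  rewrite rcons_path sr rxy andbT.
  by apply: sub_path pp' => a b /andP[].
apply/imsetP; exists (last x p'); first exact: mem_last.
by rewrite next_nth mem_last index_last // nth_default // setUC.
Qed.

Lemma edge_rel r c a b : symmetric r -> cycle r c ->
  [set a; b] \in cycle_edges c -> r a b.
Proof.
move=> sr cc /imsetP[z zc /set2_inv [[-> ->]|[-> ->]]].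
  exact: next_cycle.
by rewrite sr; exact: next_cycle.
Qed.

Lemma edge_mem c a b : [set a; b] \in cycle_edges c -> (a \in c) /\ (b \in c).
Proof.
by case/imsetP=> z zc /set2_inv [[-> ->]|[-> ->]]; rewrite mem_next.
Qed.

Lemma next_edge c z : z \in c -> [set z; next c z] \in cycle_edges c.
Proof. by move=> zc; apply/imsetP; exists z. Qed.

Lemma leaf_not_cycle r c z t : symmetric r -> is_cycle r c ->
  (forall y, r z y -> y = t) -> z \notin c.
Proof.
move=> sr /and3P[Hu Hs Hc] Ht; apply/negP => zc.
have h1 := Ht _ (next_cycle Hc zc).
have h2 : prev c z = t by apply: Ht; rewrite sr; exact: prev_cycle.
have := NN Hu Hs zc; rewrite h1 -h2 next_prev // eqxx //.
Qed.

Lemma sub_is_cycle (r r' : rel T) c : subrel r r' -> is_cycle r c -> is_cycle r' c.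
Proof. by move=> H /and3P[a b cc]; rewrite /is_cycle a b (sub_cycle H cc). Qed.

End Gen.



Lemma edge_is_n1 (T : finType) (a b x y : T) : a != x -> a != y -> edge_is a b x y = false.
Proof. by move=> ax ay; rewrite /edge_is (negbTE ax) (negbTE ay). Qed.
Lemma edge_is_n2 (T : finType) (a b x y : T) : b != x -> b != y -> edge_is a b x y = false.
Proof. by move=> bx by'; rewrite /edge_is (negbTE bx) (negbTE by') !andbF. Qed.

Lemma edge_is_n3 (T : finType) (a b x y : T) : a != x -> b != x -> edge_is a b x y = false.
Proof. by move=> ax bx; rewrite /edge_is (negbTE ax) (negbTE bx) andbF. Qed.
Lemma edge_is_n4 (T : finType) (a b x y : T) : a != y -> b != y -> edge_is a b x y = false.
Proof. by move=> ay by'; rewrite /edge_is (negbTE ay) (negbTE by') andbF. Qed.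

Lemma conn_edge (T : finType) (r : rel T) a b x y : symmetric r -> edge_is a b x y ->
  connect r x y -> connect r a b.
Proof.
move=> sr; rewrite /edge_is => /orP[/andP[/eqP-> /eqP->]|/andP[/eqP-> /eqP->]] //.
by rewrite (sym_connect_sym sr).
Qed.

Section Switch.
Variable T : finType.
Variables (e : rel T) (l u v w : T).
Hypothesis se : symmetric e.
Hypothesis ie : irreflexive e.
Hypothesis leaf : forall y, e l y -> y = u.
Hypothesis elu : e l u.
Hypothesis Hint : interchangeable e l u v w.

Let e' := two_switch e l u v w.

Lemma e'E a b : e' a b = (e a b && ~~ edge_is a b l u && ~~ edge_is a b v w)
   || edge_is a b l v || edge_is a b u w.
Proof using se ie leaf elu Hint. by rewrite /e' /two_switch Hint. Qed.

Lemma Hfacts : e v w /\ l != v /\ l != w /\ u != v /\ u != w /\ ~~ e l v /\ ~~ e u w.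
Proof using se ie leaf elu Hint.
by move: Hint; rewrite /interchangeable => /and3P[_ ? /and3P[? ? /and3P[? ? /andP[? ?]]]]; repeat split.
Qed.

Lemma lu : l != u.
Proof using se ie leaf elu Hint. by apply/eqP => E; move: elu; rewrite E ie. Qed.

Lemma se' : symmetric e'.
Proof using se ie leaf elu Hint. by move=> a b; rewrite !e'E se (edge_is_sym a) (edge_is_sym a b v w) (edge_is_sym a b l v) (edge_is_sym a b u w). Qed.

Lemma leaf' y : e' l y -> y = v.
Proof using se ie leaf elu Hint.
case: Hfacts => _ [lv [lw _]].
rewrite e'E => /orP[/orP[/andP[/andP[ely]]|]|].
- by have := leaf ely => ->; rewrite /edge_is !eqxx.
- by rewrite /edge_is eqxx (negbTE lv) /= orbF => /eqP.
- by rewrite edge_is_n1 // lu.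
Qed.

Lemma e'lv : e' l v.
Proof using se ie leaf elu Hint. by rewrite e'E /edge_is !eqxx !orbT. Qed.

Lemma e'uw : e' u w.
Proof using se ie leaf elu Hint. by rewrite e'E /edge_is !eqxx !orbT. Qed.

Lemma back a b : a != l -> b != l -> e' a b -> ~~ edge_is a b u w ->
  e a b && ~~ edge_is a b v w.
Proof using se ie leaf elu Hint.
move=> al bl; rewrite e'E => /orP[/orP[/andP[/andP[-> _] ->]|]|] //.
  move=> E; have : a == l.
    by move: E; rewrite /edge_is => /orP[/andP[->]|/andP[_ /eqP bl']] //; rewrite bl' eqxx in bl.
  by rewrite (negbTE al).
by move=> ->.
Qed.

Lemma fwd a b : e a b -> ~~ edge_is a b l u -> ~~ edge_is a b v w -> e' a b.
Proof using se ie leaf elu Hint. by move=> eab nlu nvw; rewrite e'E eab nlu nvw. Qed.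

Lemma noL c : is_cycle e' c -> l \notin c.
Proof using se ie leaf elu Hint. by move=> Hc; apply: (leaf_not_cycle se' Hc leaf'). Qed.

Lemma to_e c : is_cycle e' c ->
  (forall z, z \in c -> ~~ edge_is z (next c z) u w) -> is_cycle e c.
Proof using se ie leaf elu Hint.
move=> Hc H; have Hl := noL Hc; case/and3P: Hc => Hu Hs Hcc.
rewrite /is_cycle Hu Hs; apply: cycle_from_next => // z zc.
have zl : z != l by apply: contraNneq Hl => <-.
have nl : next c z != l by apply: contraNneq Hl => <-; rewrite mem_next.
by case/andP: (back zl nl (next_cycle Hcc zc) (H z zc)).
Qed.

Lemma conn' : connected_graph e -> connect e' l u -> connect e' v w ->
  connected_graph e'.
Proof using se ie leaf elu Hint.
move=> cg H1 H2 a b; apply: (connect_sub _ (cg a b)) => x y exy.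
case E1: (edge_is x y l u); first exact: conn_edge se' E1 H1.
case E2: (edge_is x y v w); first exact: conn_edge se' E2 H2.
by apply: connect1; apply: fwd; rewrite ?E1 ?E2.
Qed.

Lemma sw_lv : two_switch e l u v w l v.
Proof using se ie leaf elu Hint. exact: e'lv. Qed.

End Switch.



Lemma deg2 (T : finType) (e : rel T) v x : 2 <= deg e v -> exists w, e v w /\ w != x.
Proof.
move=> H; case: (pickP (fun w => e v w && (w != x))) => [w /andP[? ?]|none].
  by exists w.
have : [set y | e v y] \subset [set x].
  apply/subsetP => y; rewrite inE in_set1 => evy.
  by have := none y; rewrite evy /= => /negbFE.
by move/subset_leq_card; rewrite cards1 => H1; move: H; rewrite /deg; move: H1; case: #|_| => [|[|]].
Qed.

Section Main.
Variable T : finType.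
Variables (e : rel T) (l u : T).
Hypothesis se : symmetric e.
Hypothesis ie : irreflexive e.
Hypothesis cg : connected_graph e.
Hypothesis uniqE : forall c1 c2, is_cycle e c1 -> is_cycle e c2 ->
        cycle_edges c1 = cycle_edges c2.
Hypothesis leaf : forall y, e l y -> y = u.
Hypothesis elu : e l u.
Hypothesis ncu : ~ on_cycle e u.
Hypothesis exc : exists c, is_cycle e c.

Lemma lu' : l != u.
Proof. by apply/eqP => E; move: elu; rewrite E ie. Qed.

Lemma not_in_cycle z c : ~ on_cycle e z -> is_cycle e c -> z \notin c.
Proof. by move=> H Hc; apply/negP => zc; apply: H; exists c. Qed.

Lemma partii v : ~ on_cycle e v -> v <> u -> 2 <= deg e v ->
  exists a b c d, u_switch e a b c d /\ two_switch e a b c d l v.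
Proof.
move=> ncv vu dv.
have uv : u != v by apply/eqP => E; apply: vu.
have lv : l != v.
  apply/eqP => E; have [w1 [e1 n1]] := deg2 u dv.
  by rewrite -E in e1; move: (leaf e1) n1 => ->; rewrite eqxx.
pose K' := fun a b => e a b && [&& a != v, b != v, a != l & b != l].
have Kv : forall y, connect K' u y -> y != v.
  move=> y H; apply: (conn_inv (P := fun z => z != v) _ H uv).
  by move=> a b /andP[_ /and4P[]].
have Kl : forall y, connect K' u y -> y != l.
  move=> y H; apply: (conn_inv (P := fun z => z != l) _ H); last by rewrite eq_sym lu'.
  by move=> a b /andP[_ /and4P[]].
have [x [exv Kx]] : exists x, e x v /\ connect K' u x.
  pose P := fun z => connect K' u z || (z == l).
  have Pu : P u by rewrite /P connect0.
  have nPv : ~~ P v.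
    rewrite /P negb_or eq_sym lv andbT; apply/negP => /Kv; by rewrite eqxx.
  have [a [b [eab Pa nPb]]] := crossing (cg u v) Pu nPv.
  move: nPb; rewrite /P negb_or => /andP[nKb bl].
  case/orP: Pa => [Ka|/eqP al].
    case bv: (b == v); first by exists a; rewrite -(eqP bv).
    have Kb : K' a b by rewrite /K' eab (Kv _ Ka) bv (Kl _ Ka) bl.
    by case/negP: nKb; exact: connect_trans Ka (connect1 Kb).
  by subst a; move: (leaf eab) nKb => ->; rewrite connect0.
have [w [evw wx]] := deg2 x dv.
have xv : x != v by apply: contraTneq exv => ->; rewrite ie.
have wv : w != v by apply: contraTneq evw => ->; rewrite ie.
have vw : v != w by rewrite eq_sym.
pose R := fun a b => e a b && ~~ edge_is a b v w.
have sR : symmetric R by move=> a b; rewrite /R se edge_is_sym.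
have Fa : ~~ connect R v w.
  apply/negP => H.
  have [c [Hc Hm]] := L2 se evw (vw : v != w) H.
  case: (edge_mem Hm) => vc _; exact: ncv (ex_intro _ c (conj Hc vc)).
have KR : subrel K' R.
  by move=> a b /andP[eab /and4P[av bv _ _]]; rewrite /R eab edge_is_n3.
have RuV : connect R u v.
  apply: connect_trans (connect_sub (fun a b H => connect1 (KR a b H)) Kx) (connect1 _).
  by rewrite /R exv edge_is_n1 // eq_sym.
have nRwu : ~~ connect R w u.
  apply/negP => H; case/negP: Fa; rewrite (sym_connect_sym sR).
  exact: connect_trans H RuV.
have nuw : ~~ e u w.
  apply/negP => euw; case/negP: nRwu; rewrite (sym_connect_sym sR); apply: connect1.
  by rewrite /R euw /edge_is (negbTE uv) (negbTE wv) andbF.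
have uw : u != w by apply: contraNneq nRwu => <-; exact: connect0.
have lw : l != w.
  apply/eqP => E; rewrite -E se in evw; by move: (leaf evw) vu.
have nlv : ~~ e l v by apply/negP => H; move: (leaf H) vu.
have Hint : interchangeable e l u v w.
  by rewrite /interchangeable elu evw lv lw uv uw nlv nuw.
exists l, u, v, w; split; last exact: (sw_lv se ie leaf elu Hint).
split => //.
set e' := two_switch e l u v w.
have S' : symmetric e' := se' se ie leaf elu Hint.
have Ke' : subrel K' e'.
  move=> a b /andP[eab /and4P[av bv al bl]].
  by apply: (fwd se ie leaf elu Hint) => //; rewrite ?edge_is_n3 ?edge_is_n1.
have Cuv : connect e' u v.
  apply: connect_trans (connect_sub (fun a b H => connect1 (Ke' a b H)) Kx) (connect1 _).
  apply: (fwd se ie leaf elu Hint) => //; last by rewrite edge_is_n1 // eq_sym.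
  by rewrite edge_is_n2 // eq_sym.
have [c0 Hc0] := exc.
have Hall : forall c, is_cycle e' c -> cycle_edges c = cycle_edges c0.
  move=> c Hc; apply: uniqE => //; apply: (to_e se ie leaf elu Hint Hc) => z zc.
  apply/negP => E.
  have nl := noL se ie leaf elu Hint Hc.
  have zl : z != l by apply: contraNneq nl => <-.
  have := L1 (proj1 (andP Hc)) (proj1 (andP (proj2 (andP Hc)))) zc.
  have Hcc : cycle e' c by case/and3P: Hc.
  have LR : subrel (L1rel c z) R.
    move=> a b /and3P[ac /eqP -> nab].
    have al : a != l by apply: contraNneq nl => <-.
    have bl : next c a != l by apply: contraNneq nl => <-; rewrite mem_next.
    apply: (back se ie leaf elu Hint al bl (next_cycle Hcc ac)).
    move: nab; rewrite !edge_isE; by rewrite edge_isE in E; rewrite (eqP E).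
  move=> H; have H2 := connect_sub (fun a b H => connect1 (LR a b H)) H.
  case/negP: nRwu; apply: (conn_edge sR _ H2).
  rewrite edge_isE in E; rewrite edge_isE setUC [[set next c z; z]]setUC.
  by rewrite eq_sym.
split.
- apply: (conn' se ie leaf elu Hint cg).
    apply: (connect_trans (connect1 (e'lv se ie leaf elu Hint))).
    by rewrite (sym_connect_sym S').
  apply: (connect_trans _ (connect1 (e'uw se ie leaf elu Hint))).
  by rewrite (sym_connect_sym S').
- exists c0; have nl0 := leaf_not_cycle se Hc0 leaf; have nv0 := not_in_cycle ncv Hc0.
  case/and3P: Hc0 => Hu Hs Hcc; rewrite /is_cycle Hu Hs /=.
  apply: (sub_in_cycle (P := [pred z | (z != l) && (z != v)])) Hcc; last first.
    apply/allP => z zc /=; apply/andP; split.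
      by apply: contraNneq nl0 => <-.
    by apply: contraNneq nv0 => <-.
  move=> a b /andP[al av] /andP[bl bv] eab.
  by apply: (fwd se ie leaf elu Hint) => //; rewrite ?edge_is_n3 ?edge_is_n1.
- by move=> c1 c2 H1 H2; rewrite (Hall _ H1) (Hall _ H2).
Qed.

Lemma parti v : on_cycle e v ->
  exists a b c d, u_switch e a b c d /\ two_switch e a b c d l v.
Proof.
case=> c1 [Hc1 vc1].
have Hc1' := Hc1; case/and3P: Hc1' => Hu1 Hs1 Hcc1.
have nu1 : u \notin c1 := not_in_cycle ncu Hc1.
have nl1 : l \notin c1 := leaf_not_cycle se Hc1 leaf.
have inu : forall z, z \in c1 -> z != u by move=> z zc; apply: contraNneq nu1 => <-.
have inl : forall z, z \in c1 -> z != l by move=> z zc; apply: contraNneq nl1 => <-.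
pose Rc := fun x y => fun a b => [&& a \in c1, b \in c1, e a b & ~~ edge_is a b x y].
have sRc : forall x y, symmetric (Rc x y).
  move=> x y a b; rewrite /Rc se edge_is_sym.
  by case: (a \in c1); case: (b \in c1).
have L1c : forall z, z \in c1 -> connect (Rc z (next c1 z)) z (next c1 z).
  move=> z zc; have H := L1 Hu1 Hs1 zc.
  have sub : subrel (L1rel c1 z) (Rc z (next c1 z)).
    by move=> a b /and3P[ac /eqP -> nab]; rewrite /Rc ac mem_next ac (next_cycle Hcc1 ac) nab.
  rewrite (sym_connect_sym (sRc _ _)).
  by apply: (connect_sub _ H) => a b /sub; exact: connect1.
have [w [evw wc nuw ew Cw]] : exists w, [/\ e v w, w \in c1, ~~ e u w,
     [set v; w] \in cycle_edges c1 & connect (Rc v w) v w].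
  case E1: (e u (next c1 v)); last first.
    exists (next c1 v); split.
    - exact: next_cycle.
    - by rewrite mem_next.
    - by rewrite E1.
    - exact: next_edge.
    - exact: L1c.
  have w12 : next c1 v != prev c1 v.
    apply: (contraTneq _ (NN Hu1 Hs1 vc1)) => E; by rewrite E next_prev // eqxx.
  have w1c : next c1 v \in c1 by rewrite mem_next.
  have w2c : prev c1 v \in c1 by rewrite mem_prev.
  have nuw2 : ~~ e u (prev c1 v).
    apply/negP => E2.
    have uw1 : u != next c1 v by rewrite eq_sym inu.
    have H : connect (fun a b => e a b && ~~ edge_is a b u (next c1 v)) u (next c1 v).
      apply: (connect_trans (connect1 (y := prev c1 v) _)).
        by rewrite E2 /edge_is eqxx (eq_sym _ (next c1 v)) (negbTE w12) (negbTE uw1).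
      apply: (connect_trans (connect1 (y := v) _)).
        by rewrite (prev_cycle Hcc1 vc1) edge_is_n1 // ?inu // eq_sym.
      apply: connect1; rewrite (next_cycle Hcc1 vc1) edge_is_n1 // ?inu //.
      by apply: contraTneq (next_cycle Hcc1 vc1) => <-; rewrite ie.
    have [c [Hc Hm]] := L2 se E1 uw1 H.
    by case: (edge_mem Hm) => uc _; apply: ncu; exists c.
  exists (prev c1 v); split => //.
  - by rewrite se; apply: prev_cycle.
  - by have := next_edge w2c; rewrite next_prev // setUC.
  - have := L1c _ w2c; rewrite next_prev // (sym_connect_sym (sRc _ _)).
    have E : Rc (prev c1 v) v =2 Rc v (prev c1 v) by move=> a b; rewrite /Rc edge_is_sym2.
    by rewrite (eq_connect E).
have vu : v != u := inu _ vc1.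
have lv : l != v by rewrite eq_sym inl.
have uw : u != w by rewrite eq_sym inu.
have lw : l != w by rewrite eq_sym inl.
have vw : v != w by apply: contraTneq evw => <-; rewrite ie.
have nlv : ~~ e l v by apply/negP => H; move: (leaf H) vu => ->; rewrite eqxx.
have Hint : interchangeable e l u v w.
  by rewrite /interchangeable elu evw lv lw (eq_sym u v) vu uw nlv nuw.
exists l, u, v, w; split; last exact: (sw_lv se ie leaf elu Hint).
split => //.
set e' := two_switch e l u v w.
have S' : symmetric e' := se' se ie leaf elu Hint.
have Rce : subrel (Rc v w) e'.
  move=> a b /and4P[ac bc eab nab].
  by apply: (fwd se ie leaf elu Hint) => //; rewrite edge_is_n1 ?inl ?inu.
have Cvw : connect e' v w := connect_sub (fun a b H => connect1 (Rce a b H)) Cw.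
pose R' := fun a b => e' a b && ~~ edge_is a b u w.
have sR' : symmetric R' by move=> a b; rewrite /R' S' edge_is_sym.
have RcR : subrel (Rc v w) R'.
  move=> a b H; rewrite /R' (Rce _ _ H); case/and4P: H => ac bc _ _.
  by rewrite edge_is_n3 ?inu.
have CR : connect R' u w.
  apply/negPn/negP => nC.
  have Cvw' : connect R' v w := connect_sub (fun a b H => connect1 (RcR a b H)) Cw.
  pose P := fun z => connect R' u z || (z == l).
  have Pu : P u by rewrite /P connect0.
  have nPv : ~~ P v.
    rewrite /P negb_or eq_sym lv andbT; apply/negP => H; case/negP: nC.
    exact: connect_trans H Cvw'.
  have [a [b [eab Pa nPb]]] := crossing (cg u v) Pu nPv.
  move: nPb; rewrite /P negb_or => /andP[nKb bl].
  case/orP: Pa => [Ka|/eqP al]; last first.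
    by subst a; move: (leaf eab) nKb => ->; rewrite connect0.
  have nR : ~~ R' a b by apply: contra nKb => H; exact: connect_trans Ka (connect1 H).
  move: nR; rewrite /R' negb_and negbK => /orP[ne'|eu].
    case E1: (edge_is a b l u).
      move: E1; rewrite /edge_is => /orP[/andP[/eqP al /eqP bu]|/andP[_ /eqP bl']].
        by move: nKb; rewrite bu connect0.
      by rewrite bl' eqxx in bl.
    case E2: (edge_is a b v w).
      move: E2; rewrite /edge_is => /orP[/andP[/eqP av _]|/andP[/eqP aw _]].
        by move: nPv; rewrite /P -av Ka.
      by move: nC; rewrite -aw Ka.
    by case/negP: ne'; apply: (fwd se ie leaf elu Hint eab); rewrite ?E1 ?E2.
  move: eu; rewrite /edge_is => /orP[/andP[/eqP au /eqP bw]|/andP[/eqP aw /eqP bu]].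
    by move: nuw; rewrite -au -bw eab.
  by move: nuw; rewrite -aw -bu se eab.
have [c2 [Hc2 _]] := L2 S' (e'uw se ie leaf elu Hint) uw CR.
have ne'vw : ~~ e' v w.
  rewrite /e' (e'E se ie leaf elu Hint) /edge_is !eqxx /= andbF /=.
  by rewrite (eq_sym v l) (negbTE lv) (negbTE vu) (negbTE vw) (eq_sym w l) (negbTE lw).
have U1 : forall c, is_cycle e' c -> [set u; w] \in cycle_edges c.
  move=> c Hc; apply/negPn/negP => nU.
  have He : is_cycle e c.
    apply: (to_e se ie leaf elu Hint Hc) => z zc; apply/negP => E; case/negP: nU.
    by have := next_edge zc; rewrite edge_isE in E; rewrite (eqP E).
  have := ew; rewrite -(uniqE He Hc1) => Hm.
  by case/negP: ne'vw; apply: (edge_rel S' _ Hm); case/and3P: Hc.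
have U2 : forall c c', is_cycle e' c -> is_cycle e' c' -> cycle_edges c \subset cycle_edges c'.
  move=> c c' Hc Hc'; apply/subsetP => f /imsetP[a ac ->].
  apply/negPn/negP => nf.
  have bc : next c a \in c by rewrite mem_next.
  have nlc := noL se ie leaf elu Hint Hc.
  have nlc' := noL se ie leaf elu Hint Hc'.
  have Hcc : cycle e' c by case/and3P: Hc.
  have Hcc' : cycle e' c' by case/and3P: Hc'.
  have notl : forall (s : seq T) (z : T), l \notin s -> z \in s -> z != l.
    by move=> s z H zs; apply: contraNneq H => <-.
  pose R := fun p q => [&& e p q, ~~ edge_is p q v w & ~~ edge_is p q a (next c a)].
  have sR : symmetric R by move=> p q; rewrite /R se !(edge_is_sym p).
  have Cuw : connect R u w.
    have /imsetP[z zc' Ez] := U1 c' Hc'.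
    have H := L1 (proj1 (andP Hc')) (proj1 (andP (proj2 (andP Hc')))) zc'.
    have sub : subrel (L1rel c' z) R.
      move=> p q /and3P[pc /eqP -> npq].
      have pl := notl _ _ nlc' pc.
      have ql : next c' p != l by apply: notl nlc' _; rewrite mem_next.
      have nuw' : ~~ edge_is p (next c' p) u w by rewrite edge_isE Ez -edge_isE.
      rewrite /R; case/andP: (back se ie leaf elu Hint pl ql (next_cycle Hcc' pc) nuw') => -> ->.
      apply/negP => E; case/negP: nf; rewrite edge_isE in E; rewrite -(eqP E).
      exact: next_edge.
    have H2 : connect R (next c' z) z.
      by apply: (connect_sub _ H) => p q /sub; exact: connect1.
    by apply: (conn_edge sR _ H2); rewrite edge_isE Ez setUC eqxx.
  have Cba : connect R (next c a) a.
    have H := L1 (proj1 (andP Hc)) (proj1 (andP (proj2 (andP Hc)))) ac.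
    apply: (connect_sub _ H) => p q /and3P[pc /eqP -> npq].
    case E: (edge_is p (next c p) u w); first exact: conn_edge sR E Cuw.
    have pl := notl _ _ nlc pc.
    have ql : next c p != l by apply: notl nlc _; rewrite mem_next.
    apply: connect1; rewrite /R npq andbT.
    by apply: (back se ie leaf elu Hint pl ql (next_cycle Hcc pc)); rewrite E.
  pose r := fun p q => e p q && ~~ edge_is p q v w.
  have sr : symmetric r by move=> p q; rewrite /r se edge_is_sym.
  have rab : r a (next c a).
    apply: (back se ie leaf elu Hint (notl _ _ nlc ac) (notl _ _ nlc bc) (next_cycle Hcc ac)).
    apply/negP => E; case/negP: nf; rewrite edge_isE in E; rewrite (eqP E); exact: U1.
  have ab : a != next c a by apply: contraTneq rab => <-; rewrite /r ie.
  have Cab : connect (fun p q => r p q && ~~ edge_is p q a (next c a)) a (next c a).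
    have E : (fun p q => r p q && ~~ edge_is p q a (next c a)) =2 R.
      by move=> p q; rewrite /r /R andbA.
    by rewrite (eq_connect E) (sym_connect_sym sR).
  have [c3 [Hc3 _]] := L2 sr rab ab Cab.
  have Hc3e : is_cycle e c3 by apply: (sub_is_cycle _ Hc3) => p q /andP[].
  have := ew; rewrite -(uniqE Hc3e Hc1) => Hm.
  have : r v w by apply: (edge_rel sr _ Hm); case/and3P: Hc3.
  by rewrite /r /edge_is !eqxx andbF.
split.
- apply: (conn' se ie leaf elu Hint cg) => //.
  apply: (connect_trans (connect1 (e'lv se ie leaf elu Hint))).
  apply: (connect_trans Cvw); rewrite (sym_connect_sym S').
  exact: connect1 (e'uw se ie leaf elu Hint).
- by exists c2.
- by move=> c c' H H'; apply/eqP; rewrite eqEsubset !U2.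
Qed.
End Main.


Theorem lemma3p1 (T : finType) (e : rel T) (l u : T) :
  simple_graph e -> unicyclic e ->
  e l u -> deg e l = 1 -> ~ on_cycle e u ->
  (forall v : T, on_cycle e v ->
     exists a b c d : T, u_switch e a b c d /\ two_switch e a b c d l v) /\
  (forall v : T, ~ on_cycle e v -> v <> u -> 2 <= deg e v ->
     exists a b c d : T, u_switch e a b c d /\ two_switch e a b c d l v).
Proof.
move=> [se ie] [cg exc uE] elu dl ncu.
have leaf : forall y, e l y -> y = u.
  move=> y ely; move/eqP: dl => /cards1P[x Ex].
  have hy : y \in [set y | e l y] by rewrite inE.
  have hu : u \in [set y | e l y] by rewrite inE.
  by move: hy hu; rewrite Ex !in_set1 => /eqP-> /eqP->.
split.
- by move=> v Hv; exact: (parti se ie cg uE leaf elu ncu Hv).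
- by move=> v Hv vu dv; exact: (partii se ie cg uE leaf elu exc Hv vu dv).
Qed.
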